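(* The three-qubit CCZ gate $\mathrm{diag}(1,1,1,1,1,1,1,-1)$ can be emulated, without ancillae, by a three-qutrit circuit consisting of qutrit Clifford gates and $R$ gates with $R$-count $3$ (exactly three $R$ gates).
   Context: A qutrit is $\mathbb{C}^3$ with basis $\ket{0},\ket{1},\ket{2}$; $\omega=e^{2\pi i/3}$. Qutrit Clifford gates are those generated (up to global phase) by $S=\mathrm{diag}(1,1,\omega)$, $H=\frac{1}{\sqrt3}\begin{pmatrix}1&1&1\\1&\omega&\bar\omega\\1&\bar\omega&\omega\end{pmatrix}$ and $\mathrm{CX}:\ket{i,j}\mapsto\ket{i,(i+j)\bmod3}$. The qutrit reflection gate is $R=\mathrm{diag}(1,1,-1)$. A qutrit unitary $V$ on $n$ qutrits emulates an $n$-qubit unitary $U$ if, identifying qubit basis states $\ket{x}$, $x\in\{0,1\}^n$, with the equally labelled qutrit basis states, $V\ket{x}=U\ket{x}$ for all $x\in\{0,1\}^n$. *)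

(* Defs.v *)
From mathcomp Require Import all_boot all_order all_algebra all_field.
Set Implicit Arguments. Unset Strict Implicit. Unset Printing Implicit Defensive.
Import GRing.Theory Num.Theory.
Local Open Scope ring_scope.

(* omega = e^{2 pi i/3} = (-1 + i sqrt 3)/2 *)
Definition omega : algC := (-1 + 'i * sqrtC 3) / 2.

Definition S1 : 'M[algC]_3 :=
  \matrix_(a < 3, b < 3) (if a == b then (if val a == 2%N then omega else 1) else 0).
Definition H1 : 'M[algC]_3 :=
  \matrix_(a < 3, b < 3) ((sqrtC 3)^-1 * omega ^+ (val a * val b)).
Definition R1 : 'M[algC]_3 :=
  \matrix_(a < 3, b < 3) (if a == b then (if val a == 2%N then -1 else 1) else 0).

(* Three qutrits: basis index i : 'I_27, the state of qutrit k is digit k of i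
   in base 3 (dig 0 least significant). *)
Definition dig (k : nat) (i : nat) : nat := (i %/ 3 ^ k) %% 3.
Definition set_dig (k : nat) (i v : nat) : nat := i - dig k i * 3 ^ k + v * 3 ^ k.

Definition on_wire (k : 'I_3) (G : 'M[algC]_3) : 'M[algC]_27 :=
  \matrix_(i < 27, j < 27)
    (if [forall l : 'I_3, (l != k) ==> (dig l i == dig l j)]
     then G (inord (dig k i)) (inord (dig k j)) else 0).

Definition CX3 (c t : 'I_3) : 'M[algC]_27 :=
  \matrix_(i < 27, j < 27)
    ((val i == set_dig t j ((dig c j + dig t j) %% 3))%:R).

Inductive gate : Type :=
| GS of 'I_3
| GH of 'I_3
| GCX of 'I_3 & 'I_3
| GR of 'I_3
| GPhase of algC.   (* global phase: Clifford gates are taken up to global phase *)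

Definition gate_valid (g : gate) : bool :=
  match g with
  | GCX c t => c != t
  | GPhase z => `|z| == 1
  | _ => true
  end.

Definition is_R (g : gate) : bool := if g is GR _ then true else false.

Definition gate_mx (g : gate) : 'M[algC]_27 :=
  match g with
  | GS k => on_wire k S1
  | GH k => on_wire k H1
  | GCX c t => CX3 c t
  | GR k => on_wire k R1
  | GPhase z => z%:M
  end.

(* circuit [g1; ...; gm] applied in that order: unitary gm * ... * g1 *)
Definition circuit_mx (s : seq gate) : 'M[algC]_27 :=
  foldl (fun M g => gate_mx g *m M) 1%:M s.

(* Three qubits: x : 'I_8, bit k of x is qubit k; embedded as the qutrit basis
   state with the same labels. *)
Definition bit (k : nat) (x : nat) : nat := (x %/ 2 ^ k) %% 2.
Definition embed (x : nat) : nat := bit 0 x + bit 1 x * 3 + bit 2 x * 9.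
Definition E : 'M[algC]_(27, 8) :=
  \matrix_(i < 27, x < 8) ((val i == embed x)%:R).

Definition emulates (V : 'M[algC]_27) (U : 'M[algC]_8) : Prop := V *m E = E *m U.

Definition CCZ : 'M[algC]_8 :=
  \matrix_(x < 8, y < 8) (if x == y then (if val x == 7%N then -1 else 1) else 0).

(* Main.v *)
Require Import Defs.
From mathcomp Require Import all_boot all_order all_algebra all_field.
Set Implicit Arguments. Unset Strict Implicit. Unset Printing Implicit Defensive.
Import GRing.Theory Num.Theory.
Local Open Scope ring_scope.

Definition dn (j : nat) : 'cV[algC]_27 := \col_(i < 27) ((val i == j)%:R).

Definition stepn (st : bool * nat) (g : gate) : bool * nat :=
  match g with
  | GCX c t => (st.1, set_dig t st.2 ((dig c st.2 + dig t st.2) %% 3))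
  | GR k => (st.1 (+) (dig k st.2 == 2%N), st.2)
  | _ => st
  end.

Definition good (g : gate) : bool :=
  match g with GCX _ _ | GR _ => true | _ => false end.

Definition sv (st : bool * nat) : 'cV[algC]_27 := (-1) ^+ st.1 *: dn st.2.

Lemma sd_bound : all (fun t => all (fun j => all (fun v =>
  (set_dig t j v < 27)%N) (iota 0 3)) (iota 0 27)) (iota 0 3).
Proof. vm_compute. reflexivity. Qed.

Lemma sd_boundP t j v : (t < 3)%N -> (j < 27)%N -> (v < 3)%N -> (set_dig t j v < 27)%N.
Proof.
move=> ht hj hv.
have /allP /(_ t) := sd_bound; rewrite mem_iota ht => /(_ isT).
move=> /allP /(_ j); rewrite mem_iota hj => /(_ isT).
by move=> /allP /(_ v); rewrite mem_iota hv => /(_ isT).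
Qed.

Lemma keyn : all (fun k => all (fun i => all (fun j =>
  ([&& (0 != k)%N ==> (dig 0 i == dig 0 j), (1 != k)%N ==> (dig 1 i == dig 1 j)
     & (2 != k)%N ==> (dig 2 i == dig 2 j)] && (dig k i == dig k j)) == (i == j))
  (iota 0 27)) (iota 0 27)) (iota 0 3).
Proof. vm_compute. reflexivity. Qed.

Definition c0 : 'I_3 := Ordinal (isT : (0 < 3)%N).
Definition c1 : 'I_3 := Ordinal (isT : (1 < 3)%N).
Definition c2 : 'I_3 := Ordinal (isT : (2 < 3)%N).

Lemma forall3 (P : 'I_3 -> bool) : [forall l, P l] = [&& P c0, P c1 & P c2].
Proof.
apply/forallP/and3P => [H|[h0 h1 h2] l]; first by split; apply H.
case: l => [[|[|[|//]]] Hl].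
- by have -> : Ordinal Hl = c0 by apply/val_inj.
- by have -> : Ordinal Hl = c1 by apply/val_inj.
- by have -> : Ordinal Hl = c2 by apply/val_inj.
Qed.

Lemma dn_delta (j : 'I_27) : dn j = delta_mx j 0.
Proof. by apply/matrixP=> i k; rewrite !mxE (ord1 k) eqxx andbT. Qed.

Lemma CX_dn c t (j : nat) : (j < 27)%N ->
  CX3 c t *m dn j = dn (set_dig t j ((dig c j + dig t j) %% 3)).
Proof.
move=> hj; rewrite (_ : j = Ordinal hj) // dn_delta -colE.
by apply/matrixP=> i k; rewrite !mxE.
Qed.

Lemma R_dn k (j : nat) : (j < 27)%N ->
  on_wire k R1 *m dn j = (if dig k j == 2%N then -1 else 1) *: dn j.
Proof.
move=> hj; rewrite (_ : j = Ordinal hj) // dn_delta -colE -dn_delta.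
apply/matrixP=> i z; rewrite !mxE /= forall3.
have hk := ltn_ord k.
have := keyn => /allP /(_ k); rewrite mem_iota hk => /(_ isT).
move=> /allP /(_ i); rewrite mem_iota ltn_ord => /(_ isT).
move=> /allP /(_ j); rewrite mem_iota hj => /(_ isT) /eqP.
have -> : (inord (dig k i) == inord (dig k j) :> 'I_3) = (dig k i == dig k j).
  by rewrite -val_eqE /= !inordK ?ltn_pmod.
rewrite inordK ?ltn_pmod //.
have E3 : [&& (c0 != k) ==> (dig c0 i == dig c0 j),
        (c1 != k) ==> (dig c1 i == dig c1 j)
      & (c2 != k) ==> (dig c2 i == dig c2 j)] =
    [&& (0%N != k) ==> (dig 0 i == dig 0 j),
        (1%N != k) ==> (dig 1 i == dig 1 j)
      & (2%N != k) ==> (dig 2 i == dig 2 j)] by [].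
rewrite E3.
case: (i =P j :> nat) => [ij|nij] K.
  move/andP: K => [-> ->]; rewrite ij /=.
  by rewrite mulr1.
rewrite mulr0.
by case: [&& _, _ & _] K => //= ->.
Qed.

Lemma stepn_bound g st : good g -> (st.2 < 27)%N -> ((stepn st g).2 < 27)%N.
Proof.
case: g => //= c t _ h; apply: sd_boundP => //; by rewrite ?ltn_ord ?ltn_pmod.
Qed.

Lemma step_ok g st : good g -> (st.2 < 27)%N -> gate_mx g *m sv st = sv (stepn st g).
Proof.
case: g => //= [c t|k] _ h; rewrite /sv -scalemxAr.
  by rewrite CX_dn.
rewrite R_dn // scalerA /=; congr (_ *: _).
by case: (dig k st.2 == 2%N); case: st.1 => /=; rewrite ?expr0 ?expr1 ?mulr1 ?mul1r ?mulN1r ?opprK.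
Qed.

Lemma foldl_mul (s : seq gate) (M : 'M[algC]_27) (v : 'cV_27) :
  foldl (fun M g => gate_mx g *m M) M s *m v
  = foldl (fun v g => gate_mx g *m v) (M *m v) s.
Proof. by elim: s M v => //= g s IH M v; rewrite IH mulmxA. Qed.

Lemma run_ok (s : seq gate) st : all good s -> (st.2 < 27)%N ->
  circuit_mx s *m sv st = sv (foldl stepn st s).
Proof.
rewrite /circuit_mx foldl_mul mul1mx.
elim: s st => //= g s IH st /andP [hg hs] h.
by rewrite step_ok // IH // stepn_bound.
Qed.

Definition circ : seq gate :=
  [:: GCX c2 c1; GCX c2 c1; GR c1; GCX c2 c1;
      GCX c1 c0; GCX c1 c0; GCX c2 c0; GR c0; GCX c1 c0; GCX c2 c0; GCX c2 c0;
      GCX c1 c0; GCX c1 c0; GCX c2 c0; GCX c2 c0; GR c0; GCX c1 c0; GCX c2 c0].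

Lemma circ_sim : all (fun x =>
  (foldl stepn (false, embed x) circ == (x == 7%N, embed x)) && (embed x < 27)%N)
  (iota 0 8).
Proof. vm_compute. reflexivity. Qed.

Lemma col_E (x : 'I_8) : col x E = dn (embed x).
Proof. by apply/matrixP=> i k; rewrite !mxE. Qed.

Lemma col_CCZ (x : 'I_8) :
  col x CCZ = (if val x == 7%N then -1 else 1) *: delta_mx x 0.
Proof.
apply/matrixP=> i k; rewrite !mxE (ord1 k) eqxx andbT.
case: eqVneq => [->|ne]; first by rewrite mulr1.
by rewrite mulr0.
Qed.

Lemma colM m n p (A : 'M[algC]_(m, n)) (B : 'M[algC]_(n, p)) x :
  col x (A *m B) = A *m col x B.
Proof. by rewrite !colE mulmxA. Qed.

Theorem mainTheorem6 :
  exists s : seq gate,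
    all gate_valid s /\ count is_R s = 3%N /\ emulates (circuit_mx s) CCZ.
Proof.
exists circ; split; first by vm_compute.
split; first by vm_compute.
rewrite /emulates.
suff H : forall x, col x (circuit_mx circ *m E) = col x (E *m CCZ).
  by apply/matrixP => i x; move: (congr1 (fun M : 'cV[algC]_27 => M i 0) (H x)); rewrite !mxE.
move=> x.
rewrite !colM col_E col_CCZ -scalemxAr -colE col_E.
have := circ_sim => /allP /(_ x); rewrite mem_iota ltn_ord => /(_ isT).
move=> /andP [/eqP S B].
have -> : dn (embed x) = sv (false, embed x) by rewrite /sv expr0 scale1r.
rewrite (@run_ok circ (false, embed x) isT B).
rewrite S /sv; congr (_ *: _).
by case: (val x == 7%N); rewrite ?expr1 ?expr0.
by rewrite /= expr0 scale1r.
Qed.
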